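(* Let $\Gamma$ be a gain operator on $\ell^\infty_+(\mathcal I)$ and let $A:=\bigcup_{r\ge0}\mathrm{Fix}(\Gamma^\oplus_{r\mathbf 1})$, where $\Gamma^\oplus_b(s):=b\oplus\Gamma(s)$. The following are equivalent: (a) $\Gamma$ satisfies the $\oplus$-MBI property; (b) $\Sigma(\hat\Gamma)$ is UGS, $\Sigma(\Gamma)$ is GATT$^*$, and $A$ is coercive; (c) $\Sigma(\hat\Gamma)$ is UGS, $\Gamma$ satisfies the NJI condition, and $A$ is coercive; (d) $\Psi(\Gamma)$ is cofinal, $\Gamma$ satisfies the NJI condition, and $A$ is coercive. Here $\hat\Gamma(s):=s\oplus\Gamma(s)$.
   Context: Let $\mathcal I$ be a nonempty countable index set; $\ell^\infty_+(\mathcal I)$ is the cone of nonnegative real families $s=(s_i)_{i\in\mathcal I}$ with $\|s\|:=\sup_i|s_i|<\infty$, ordered componentwise ($s>0$ means $s\ge0$, $s\ne0$); $\mathbf 1$ is the all-ones vector; $\oplus$ is the componentwise maximum. $\mathcal K_\infty$: continuous strictly increasing unbounded $\gamma:\mathbb R_+\to\mathbb R_+$ with $\gamma(0)=0$. For $\mathcal J\subset\mathcal I$, $s_{|\mathcal J}$ agrees with $s$ on $\mathcal J$ and is $0$ elsewhere. A sequence in $\ell^\infty(\mathcal I)$ converges weak$^*$ (viewing $\ell^\infty=(\ell^1)^*$) iff it is norm-bounded and converges componentwise. Gain operator: for each $i$ a finite (possibly empty) $\mathcal I_i\subset\mathcal I\setminus\{i\}$; directed graph $\mathcal G$ with vertices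 $\mathcal I$ and edges $ji$, $j\in\mathcal I_i$; a pointwise equicontinuous family $\gamma_{ij}\in\mathcal K_\infty$ ($ji\in E(\mathcal G)$); functions $\mu_i:\ell^\infty_+(\mathcal I)\to[0,\infty]$ with (M1) some $\xi\in\mathcal K_\infty$ has $\mu_i(0)=0$, $\mu_i(s)\ge\xi(\|s\|)$; (M2) $\mu_i$ monotone; (M3) for each finite $\mathcal J$, $\mu_i$ restricted to vectors vanishing off $\mathcal J$ is finite-valued and continuous; (M4) for each norm-bounded $A$ and $\varepsilon>0$ there is $\delta>0$ with $\sup_i|\mu_i(s_{|\mathcal I_i})-\mu_i(s^0_{|\mathcal I_i})|\le\varepsilon$ whenever $s^0\in A$, $\|s-s^0\|\le\delta$. $\Gamma_i(s):=\mu_i([\gamma_{ij}(s_j)]_{j\in\mathcal I_i})$ (argument zero outside $\mathcal I_i$). For monotone $T$ with $T(0)=0$: $\mathrm{Fix}(T)$ is the fixed point set, $\Psi(T):=\{s:T(s)\le s\}$; $\Sigma(T)$ is the system $s^{n+1}=T(s^n)$; UGS: $\|T^n(s)\|\le\varphi(\|s\|)$ for some $\varphi\in\mathcal K_\infty$ and all $s,n$; GATT$^*$: $T^n(s)\to0$ weak$^*$ for every $s$. NJI condition: $\Gamma(s)\ge s$ fails for every $s>0$. $\oplus$-MBI property: there is $\varphi\in\mathcal K_\infty$ such that for all $s,b\in\ell^\infty_+(\mathcal I)$, $s\le b\oplus\Gamma(s)$ implies $\|s\|\le\varphi(\|b\|)$. A set $A$ is cofinal if every $s$ has $\hat s\in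 A$ with $s\le\hat s$; it is coercive if there is $\underline\varphi\in\mathcal K_\infty$ with $s\ge\underline\varphi(\|s\|)\mathbf 1$ for all $s\in A$. *)

(* Defs.v *)
From HB Require Import structures.
From mathcomp Require Import all_boot all_order all_algebra.
From mathcomp Require Import all_classical all_reals all_analysis.
Set Implicit Arguments. Unset Strict Implicit. Unset Printing Implicit Defensive.
Import Order.TTheory GRing.Theory Num.Theory.
Import numFieldNormedType.Exports.
Local Open Scope classical_set_scope.
Local Open Scope ring_scope.

Section Defs.
Variables (R : realType) (I : countType).

Definition linf_pos (s : I -> R) : Prop :=
  (forall i, 0 <= s i) /\ exists M : R, forall i, s i <= M.

Definition nrm (s : I -> R) : R := sup (range (fun i => `|s i|)).

Definition vle (s t : I -> R) : Prop := forall i, s i <= t i.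

Definition vmax (s t : I -> R) : I -> R := fun i => Num.max (s i) (t i).

Definition vzero : I -> R := fun _ => 0.
Definition vconst (r : R) : I -> R := fun _ => r.

Definition restr (J : set I) (s : I -> R) : I -> R :=
  fun j => if j \in J then s j else 0.

Definition Kinf (g : R -> R) : Prop :=
  g 0 = 0 /\
  {within [set x : R | 0 <= x], continuous g} /\
  (forall x y, 0 <= x -> x < y -> g x < g y) /\
  (forall M : R, exists x, 0 <= x /\ M < g x).

(* gain operator data: (Ii, gam, mu) with gam i j = gamma_ij for j in I_i *)
Definition gain_operator (Ii : I -> set I) (gam : I -> I -> R -> R)
  (mu : I -> (I -> R) -> \bar R) : Prop :=
  (forall i, finite_set (Ii i) /\ ~ Ii i i) /\
  (forall i j, Ii i j -> Kinf (gam i j)) /\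
  (forall r e : R, 0 <= r -> 0 < e -> exists2 d : R, 0 < d &
     forall i j r', Ii i j -> 0 <= r' -> `|r' - r| <= d ->
       `|gam i j r' - gam i j r| <= e) /\
  (forall i s, linf_pos s -> (0 <= mu i s)%E) /\
  (exists2 xi, Kinf xi &
     forall i, mu i vzero = 0%E /\
       forall s, linf_pos s -> ((xi (nrm s))%:E <= mu i s)%E) /\
  (forall i s t, linf_pos s -> linf_pos t -> vle s t -> (mu i s <= mu i t)%E) /\
  (forall i (J : set I), finite_set J ->
     forall s, linf_pos s -> (forall j, ~ J j -> s j = 0) ->
       (mu i s < +oo)%E /\
       (forall e : R, 0 < e -> exists2 d : R, 0 < d &
          forall t, linf_pos t -> (forall j, ~ J j -> t j = 0) ->
            nrm (fun j => t j - s j) <= d ->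
            (`|mu i t - mu i s| <= e%:E)%E)) /\
  (forall (A : set (I -> R)) (e : R),
     A `<=` linf_pos -> (exists C : R, forall s, A s -> nrm s <= C) -> 0 < e ->
     exists2 d : R, 0 < d &
       forall s0 s, A s0 -> linf_pos s -> nrm (fun j => s j - s0 j) <= d ->
         forall i, (`|mu i (restr (Ii i) s) - mu i (restr (Ii i) s0)| <= e%:E)%E).

Definition Gam (Ii : I -> set I) (gam : I -> I -> R -> R)
  (mu : I -> (I -> R) -> \bar R) (s : I -> R) : I -> R :=
  fun i => fine (mu i (fun j => if j \in Ii i then gam i j (s j) else 0)).

Definition hatop (T : (I -> R) -> I -> R) (s : I -> R) : I -> R := vmax s (T s).

Definition plusop (T : (I -> R) -> I -> R) (b : I -> R) (s : I -> R) : I -> R :=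
  vmax b (T s).

Definition Fix (T : (I -> R) -> I -> R) : set (I -> R) :=
  [set s | linf_pos s /\ T s = s].

Definition Psi (T : (I -> R) -> I -> R) : set (I -> R) :=
  [set s | linf_pos s /\ vle (T s) s].

Definition Aset (T : (I -> R) -> I -> R) : set (I -> R) :=
  [set s | exists2 r : R, 0 <= r & Fix (plusop T (vconst r)) s].

Definition UGS (T : (I -> R) -> I -> R) : Prop :=
  exists2 phi, Kinf phi &
    forall s, linf_pos s -> forall n : nat, nrm (iter n T s) <= phi (nrm s).

(* weak-* convergence of a sequence in l^oo to 0: norm-bounded and componentwise *)
Definition weakstar_to0 (u : nat -> I -> R) : Prop :=
  (exists M : R, forall n, nrm (u n) <= M) /\
  (forall i, (fun n => u n i) @ \oo --> (0 : R)).

Definition GATTs (T : (I -> R) -> I -> R) : Prop :=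
  forall s, linf_pos s -> weakstar_to0 (fun n => iter n T s).

Definition NJI (T : (I -> R) -> I -> R) : Prop :=
  forall s, linf_pos s -> s <> vzero -> ~ vle s (T s).

Definition MBI (T : (I -> R) -> I -> R) : Prop :=
  exists2 phi, Kinf phi &
    forall s b, linf_pos s -> linf_pos b -> vle s (vmax b (T s)) ->
      nrm s <= phi (nrm b).

Definition cofinal (A : set (I -> R)) : Prop :=
  forall s, linf_pos s -> exists2 t, A t & vle s t.

Definition coercive (A : set (I -> R)) : Prop :=
  exists2 phi, Kinf phi & forall s, A s -> vle (vconst (phi (nrm s))) s.

End Defs.

(* Main.v *)
Require Import Defs.
From mathcomp Require Import all_boot all_order all_algebra.
From mathcomp Require Import all_classical all_reals all_analysis.
From mathcomp Require Import lra.
Import Order.TTheory GRing.Theory Num.Theory.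
Import numFieldNormedType.Exports.
Set Implicit Arguments. Unset Strict Implicit. Unset Printing Implicit Defensive.
Local Open Scope classical_set_scope.
Local Open Scope ring_scope.

Section Kinf_lemmas.
Variable R : realType.
Implicit Types g h : R -> R.

Lemma Kinf_le g x y : Kinf g -> 0 <= x -> x <= y -> g x <= g y.
Proof.
move=> [_ [_ [Hm _]]] x0; rewrite le_eqVlt => /predU1P[->//|xy].
exact/ltW/Hm.
Qed.

Lemma Kinf_ge0 g x : Kinf g -> 0 <= x -> 0 <= g x.
Proof. by move=> Hg x0; case: (Hg) => <- _; apply: Kinf_le. Qed.

Lemma Kinf_ltW g x y : Kinf g -> 0 <= x -> 0 <= y -> g x < g y -> x < y.
Proof.
move=> Hg x0 y0 H; rewrite ltNge; apply/negP => yx.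
by have := Kinf_le Hg y0 yx; rewrite leNgt H.
Qed.

Lemma Kinf_leW g x y : Kinf g -> 0 <= x -> 0 <= y -> g x <= g y -> x <= y.
Proof.
move=> [g0 [_ [Hm _]]] x0 y0 H; rewrite leNgt; apply/negP => yx.
by have := Hm _ _ y0 yx; rewrite ltNge H.
Qed.

Lemma Kinf_inv g : Kinf g -> exists2 h, Kinf h &
  (forall x, 0 <= x -> h (g x) = x) /\ (forall y, 0 <= y -> g (h y) = y).
Proof.
move=> Hg; have [g0 [gc [gm gu]]] := Hg.
have ex : forall y, exists x, 0 <= y -> 0 <= x /\ g x = y.
  move=> y; case: (lerP 0 y) => y0; last by exists 0.
  have [X [X0 yX]] := gu y.
  have gcX : {within `[0, X], continuous g}.
    apply: continuous_subspaceW gc => z /=; rewrite in_itv /= => /andP[].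
    by [].
  have [|c cX gcy] := @IVT R g 0 X y X0 gcX.
    by rewrite g0 (min_l (Kinf_ge0 Hg X0)) (max_r (Kinf_ge0 Hg X0)) y0 ltW.
  by exists c => _; split => //; move: cX; rewrite in_itv /= => /andP[].
have [h Hh] := choice ex.
have hg x : 0 <= x -> h (g x) = x.
  move=> x0; have [h0 hx] := Hh (g x) (Kinf_ge0 Hg x0).
  apply/eqP; rewrite eq_le; apply/andP; split.
    by apply: (Kinf_leW Hg) => //; rewrite hx.
  by apply: (Kinf_leW Hg) => //; rewrite hx.
have gh y : 0 <= y -> g (h y) = y by move=> y0; case: (Hh y y0).
have h0 y : 0 <= y -> 0 <= h y by move=> y0; case: (Hh y y0).
have hm x y : 0 <= x -> x < y -> h x < h y.
  move=> x0 xy; have y0 : 0 <= y by exact: le_trans (ltW xy).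
  apply: (Kinf_ltW Hg); rewrite ?h0 // !gh //.
have hlt y x : 0 <= y -> 0 <= x -> y < g x -> h y < x.
  by move=> y0 x0 yx; apply: (Kinf_ltW Hg); rewrite ?h0 ?gh.
have hgt y x : 0 <= y -> 0 <= x -> g x < y -> x < h y.
  by move=> y0 x0 yx; apply: (Kinf_ltW Hg); rewrite ?h0 ?gh.
exists h; last by split.
split; first by rewrite -{1}g0 hg.
split; last first.
  split; first exact: hm.
  move=> M; exists (g (Num.max M 0 + 1)); split.
    by apply: Kinf_ge0 => //; rewrite addr_ge0 // le_max lexx orbT.
  rewrite hg; last by rewrite addr_ge0 // le_max lexx orbT.
  have : M <= Num.max M 0 by rewrite le_max lexx.
  lra.
have -> : [set x : R | 0 <= x] = `[0, +oo[%classic.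
  by apply/seteqP; split => x /=; rewrite in_itv /= andbT.
apply/continuous_within_itvcyP; split.
  move=> y; rewrite in_itv /= andbT => y0.
  have y0' : 0 <= y by exact: ltW.
  have hh0 : h 0 = 0 by rewrite -{1}g0 hg.
  have x00 : 0 < h y by rewrite -hh0; apply: hm.
  apply/cvgrPdist_lt => e e0.
  pose e' := Num.min e (h y) / 2.
  have e'0 : 0 < e' by rewrite divr_gt0 // lt_min e0 x00.
  have e'e : e' < e.
    have : Num.min e (h y) <= e by rewrite ge_min lexx.
    rewrite /e'; lra.
  have e'x : e' < h y.
    have : Num.min e (h y) <= h y by rewrite ge_min lexx orbT.
    rewrite /e'; lra.
  have xe0 : 0 <= h y - e' by rewrite subr_ge0 ltW.
  have ay : g (h y - e') < y.
    by rewrite -{2}(gh y y0') gm // ltrBlDr ltrDl.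
  have yc : y < g (h y + e').
    by rewrite -{1}(gh y y0') gm // ?ltrDl // h0.
  near=> z.
  have : z \in `]g (h y - e'), g (h y + e')[.
    by near: z; apply: near_in_itvoo; rewrite in_itv /= ay yc.
  rewrite in_itv /= => /andP[az zc].
  have z0 : 0 <= z by apply: le_trans (ltW az); apply: Kinf_ge0.
  have l1 := hgt z (h y - e') z0 xe0 az.
  have l2 := hlt z (h y + e') z0 (addr_ge0 (h0 _ y0') (ltW e'0)) zc.
  rewrite ltr_norml; apply/andP; split; lra.
have hh0 : h 0 = 0 by rewrite -{1}g0 hg.
apply/cvgrPdist_lt => e e0; rewrite hh0.
have ge0 : 0 < g e by rewrite -g0 gm.
near=> z.
have z0 : 0 < z by near: z; apply: nbhs_right_gt.
have ze : z < g e by near: z; apply: nbhs_right_lt.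
have := hlt z e (ltW z0) (ltW e0) ze.
have := h0 z (ltW z0).
rewrite sub0r normrN.
by move=> a b; rewrite ger0_norm.
Unshelve. all: by end_near.
Qed.

End Kinf_lemmas.

Section Main.
Variables (R : realType) (I : countType) (i0 : I).
Implicit Types s t b w : I -> R.
Implicit Types J : set I.

Lemma linf_bnd s : linf_pos s -> exists M, forall i, `|s i| <= M.
Proof.
by move=> [s0 [M HM]]; exists M => i; rewrite ger0_norm.
Qed.

Lemma nrm_ub s i : (exists M, forall i, `|s i| <= M) -> `|s i| <= nrm s.
Proof.
move=> [M HM]; apply: ub_le_sup; last by exists i.
by exists M => _ [j _ <-].
Qed.

Lemma nrm_le s c : (forall i, `|s i| <= c) -> nrm s <= c.
Proof.
by move=> H; apply: ge_sup; [exists `|s i0|, i0 | move=> _ [j _ <-]].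
Qed.

Lemma linf_le s i : linf_pos s -> s i <= nrm s.
Proof.
move=> Hs; have := nrm_ub i (linf_bnd Hs).
by rewrite ger0_norm //; case: Hs.
Qed.

Lemma nrm_ge0 s : linf_pos s -> 0 <= nrm s.
Proof. by move=> Hs; apply: le_trans (linf_le i0 Hs); case: Hs. Qed.

Lemma nrm_const r : 0 <= r -> nrm (@vconst R I r) = r.
Proof.
move=> r0; apply/eqP; rewrite eq_le; apply/andP; split.
  by apply: nrm_le => i; rewrite /vconst ger0_norm.
have := @nrm_ub (@vconst R I r) i0; rewrite /vconst ger0_norm //; apply.
by exists r.
Qed.

Lemma nrm0 : nrm (@vzero R I) = 0.
Proof.
have -> : @vzero R I = @vconst R I 0 by [].
exact: nrm_const.
Qed.

Lemma nrm_mono s t : linf_pos s -> linf_pos t -> vle s t -> nrm s <= nrm t.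
Proof.
move=> Hs Ht st; apply: nrm_le => i; rewrite ger0_norm; last by case: Hs.
exact: le_trans (st i) (linf_le i Ht).
Qed.

Lemma linf_const r : 0 <= r -> linf_pos (@vconst R I r).
Proof. by move=> r0; split => //; exists r. Qed.

Lemma linf_vmax s t : linf_pos s -> linf_pos t -> linf_pos (vmax s t).
Proof.
move=> [s0 [M HM]] [t0 [N HN]]; split.
  by move=> i; rewrite /vmax le_max s0.
by exists (Num.max M N) => i; rewrite /vmax ge_max !le_max HM HN orbT.
Qed.

Lemma vle_const_nrm s : linf_pos s -> vle s (@vconst R I (nrm s)).
Proof. by move=> Hs i; apply: linf_le. Qed.


Variables (Ii : I -> set I) (gam : I -> I -> R -> R) (mu : I -> (I -> R) -> \bar R).
Hypothesis Hgo : gain_operator Ii gam mu.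

Local Notation G := (Gam Ii gam mu).
Definition vec i s : I -> R := fun j => if j \in Ii i then gam i j (s j) else 0.

Lemma gam_ge0 i j x : Ii i j -> 0 <= x -> 0 <= gam i j x.
Proof.
case: Hgo => _ [HK _] Hij x0; exact: Kinf_ge0 (HK _ _ Hij) x0.
Qed.

Lemma gam_le i j x y : Ii i j -> 0 <= x -> x <= y -> gam i j x <= gam i j y.
Proof.
case: Hgo => _ [HK _] Hij x0; exact: Kinf_le (HK _ _ Hij) x0.
Qed.

Lemma gam_bnd C : 0 <= C ->
  exists K, forall i j x, Ii i j -> 0 <= x -> x <= C -> gam i j x <= K.
Proof.
move=> C0.
have [_ [HK [Heq _]]] := Hgo.
pose P c := exists K, forall i j, Ii i j -> gam i j c <= K.
suff [K HKb] : P C.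
  by exists K => i j x Hij x0 xC; apply: le_trans (HKb i j Hij); apply: gam_le.
pose S := [set c | 0 <= c <= C /\ P c].
have S0 : S 0.
  split; first by rewrite lexx C0.
  by exists 0 => i j Hij; case: (HK i j Hij) => ->.
have hs : has_sup S by split; [exists 0 | exists C => c [/andP[_ ->]]].
set c := sup S.
have c0 : 0 <= c by apply: sup_upper_bound.
have cC : c <= C by apply: ge_sup; [exists 0 | move=> z [/andP[_ ->]]].
have [d d0 Hd] := Heq c 1 c0 ltr01.
have [c1 Sc1 c1c] := sup_adherent d0 hs.
have c1c' : c1 <= c by exact: sup_upper_bound hs _ Sc1.
move: c1c; rewrite -/c => c1c.
have [/andP[c10 c1C] [K1 HK1]] := Sc1.
have Pc : forall i j, Ii i j -> gam i j c <= K1 + 1.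
  move=> i j Hij; have := Hd i j c1 Hij c10.
  have : `|c1 - c| <= d by rewrite ler0_norm ?subr_le0 //; lra.
  move=> H1 /(_ H1); rewrite ler_norml => /andP[H2 _].
  have := HK1 i j Hij; lra.
pose c' := Num.min (c + d) C.
have c'0 : 0 <= c' by rewrite le_min C0 andbT addr_ge0 // ltW.
have Pc' : P c'.
  exists (K1 + 2) => i j Hij; have := Hd i j c' Hij c'0.
  have : `|c' - c| <= d.
    rewrite ger0_norm; last by rewrite subr_ge0 le_min cC andbT lerDl ltW.
    by rewrite lerBlDl ge_min lexx.
  move=> H1 /(_ H1); rewrite ler_norml => /andP[_ H2].
  have := Pc i j Hij; lra.
have Sc' : S c' by split => //; rewrite c'0 ge_min lexx orbT.
have c'c : c' <= c by exact: sup_upper_bound hs _ Sc'.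
move: c'c; rewrite /c' ge_min => /orP[|CC].
  by move=> cd; exfalso; move: cd; rewrite leNgt ltrDl d0.
have -> : C = c by apply/eqP; rewrite eq_le cC CC.
by exists (K1 + 1).
Qed.


Lemma vec_supp i s j : ~ Ii i j -> vec i s j = 0.
Proof. by move=> H; rewrite /vec memNset. Qed.

Lemma vec_linf s : linf_pos s ->
  exists2 K, 0 <= K & forall i, linf_pos (vec i s) /\ forall j, vec i s j <= K.
Proof.
move=> Hs; have [K HK] := gam_bnd (nrm_ge0 Hs).
have s0 : forall j, 0 <= s j by case: Hs.
exists (Num.max K 0); first by rewrite le_max lexx orbT.
have Hb : forall i j, vec i s j <= Num.max K 0.
  move=> i j; rewrite /vec; case: (boolP (j \in Ii i)) => [/set_mem Hij|_].
    by rewrite le_max HK // linf_le.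
  by rewrite le_max lexx orbT.
move=> i; split => //; split; last by exists (Num.max K 0).
move=> j; rewrite /vec; case: (boolP (j \in Ii i)) => [/set_mem Hij|_] //.
exact: gam_ge0.
Qed.

Lemma mu_fin i w : linf_pos w -> (forall j, ~ Ii i j -> w j = 0) ->
  mu i w \is a fin_num.
Proof.
move=> Hw Hsupp; have [HI [_ [_ [Hmu0 [_ [_ [HM3 _]]]]]]] := Hgo.
rewrite ge0_fin_numE; last exact: Hmu0.
by have [] := HM3 i (Ii i) (proj1 (HI i)) w Hw Hsupp.
Qed.

Lemma G_def s i : G s i = fine (mu i (vec i s)).
Proof. by []. Qed.

Lemma G_ge0 s i : linf_pos s -> 0 <= G s i.
Proof.
move=> Hs; rewrite G_def; apply: fine_ge0.
have [_ [_ [_ [Hmu0 _]]]] := Hgo; apply: Hmu0.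
by have [K _ /(_ i) []] := vec_linf Hs.
Qed.

Lemma G_mono s t : linf_pos s -> linf_pos t -> vle s t -> vle (G s) (G t).
Proof.
move=> Hs Ht st i; rewrite !G_def.
have [_ [_ [_ [_ [_ [HM2 _]]]]]] := Hgo.
have [Ks _ /(_ i) [Hvs _]] := vec_linf Hs.
have [Kt _ /(_ i) [Hvt _]] := vec_linf Ht.
apply: fine_le; rewrite ?inE; try apply: mu_fin => //; try exact: vec_supp.
apply: HM2 => // j; rewrite /vec; case: (boolP (j \in Ii i)) => [/set_mem Hij|_] //.
by apply: gam_le => //; case: Hs.
Qed.

Lemma vec0 i : vec i (@vzero R I) = @vzero R I.
Proof.
apply/funext => j; rewrite /vec /vzero; case: (boolP (j \in Ii i)) => [/set_mem Hij|_] //.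
by have [_ [HK _]] := Hgo; case: (HK i j Hij).
Qed.

Lemma mu0 i : mu i (@vzero R I) = 0%E.
Proof. by have [_ [_ [_ [_ [[xi _ HM1] _]]]]] := Hgo; case: (HM1 i). Qed.

Lemma G0 : G (@vzero R I) = @vzero R I.
Proof. by apply/funext => i; rewrite G_def vec0 mu0. Qed.

Lemma linf_restr J w : linf_pos w -> linf_pos (restr J w).
Proof.
move=> [w0 [M HM]]; split.
  by move=> j; rewrite /restr; case: (j \in J).
exists (Num.max M 0) => j; rewrite /restr; case: (j \in J).
  by rewrite le_max HM.
by rewrite le_max lexx orbT.
Qed.

Lemma restr_supp i w j : ~ Ii i j -> restr (Ii i) w j = 0.
Proof. by move=> H; rewrite /restr memNset. Qed.

Lemma restr_vec i s : restr (Ii i) (vec i s) = vec i s.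
Proof.
by apply/funext => j; rewrite /restr /vec; case: (j \in Ii i).
Qed.

Lemma mu_bnd K : 0 <= K -> exists L : R, forall i w, linf_pos w -> nrm w <= K ->
  (mu i (restr (Ii i) w) <= L%:E)%E.
Proof.
move=> K0; have [_ [_ [_ [Hmu0 [_ [_ [_ HM4]]]]]]] := Hgo.
pose A := [set w : I -> R | @linf_pos R I w /\ nrm w <= K].
have [|||d d0 Hd] := HM4 A 1.
- by move=> w [].
- by exists K => w [].
- exact: ltr01.
have claim : forall (k : nat) i w, linf_pos w -> nrm w <= K ->
    (forall j, w j <= k%:R * d) -> (mu i (restr (Ii i) w) <= k%:R%:E)%E.
  elim=> [|k IH] i w Hw wK wk.
    have -> : w = @vzero R I.
      apply/funext => j; apply/eqP; rewrite eq_le; have := wk j.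
      by rewrite mul0r => ->; case: Hw => ->.
    have -> : restr (Ii i) (@vzero R I) = @vzero R I.
      by apply/funext => j; rewrite /restr; case: (j \in Ii i).
    by rewrite mu0.
  have w0 : forall j, 0 <= w j by case: Hw.
  have kd0 : 0 <= k%:R * d by rewrite mulr_ge0 // ltW.
  pose w' := fun j => Num.min (w j) (k%:R * d).
  have Hw' : linf_pos w'.
    split; first by move=> j; rewrite /w' le_min w0.
    by exists (k%:R * d) => j; rewrite /w' ge_min lexx orbT.
  have w'w : vle w' w by move=> j; rewrite /w' ge_min lexx.
  have w'K : nrm w' <= K by apply: le_trans wK; apply: nrm_mono.
  have IH' := IH i w' Hw' w'K (fun j => ltac:(by rewrite /w' ge_min lexx orbT)).
  have Hdist : nrm (fun j => w j - w' j) <= d.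
    apply: nrm_le => j; rewrite /w'; have := wk j; have := w0 j.
    rewrite mulrSr mulrDl mul1r.
    move=> H0 H2.
    have m1 : Num.min (w j) (k%:R*d) <= w j by rewrite ge_min lexx.
    have m2 : w j - d <= Num.min (w j) (k%:R*d).
      by rewrite le_min; apply/andP; split; lra.
    rewrite ger0_norm; lra.
  have := Hd w' w (conj Hw' w'K) Hw Hdist i.
  have f1 := mu_fin (i:=i) (linf_restr (Ii i) Hw) (@restr_supp i w).
  have f2 := mu_fin (i:=i) (linf_restr (Ii i) Hw') (@restr_supp i w').
  move: IH'; rewrite -(fineK f1) -(fineK f2) -EFinB abse_EFin !lee_fin.
  rewrite ler_norml => H1 /andP[_ H2].
  rewrite -natr1; lra.
exists (Num.truncn (K / d)).+1%:R => i w Hw wK; apply: claim => // j.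
apply: le_trans (linf_le j Hw) _; apply: le_trans wK _.
rewrite -ler_pdivrMr //; exact: ltW (truncnS_gt _).
Qed.

Lemma G_linf s : linf_pos s -> linf_pos (G s).
Proof.
move=> Hs; split; first by move=> i; exact: G_ge0.
have [K K0 HK] := vec_linf Hs.
have [L HL] := mu_bnd K0.
exists L => i; rewrite G_def -restr_vec.
have [Hv Hvb] := HK i.
have : (mu i (restr (Ii i) (vec i s)) <= L%:E)%E.
  apply: HL => //; apply: nrm_le => j; rewrite ger0_norm //; by case: Hv.
rewrite restr_vec -(fineK (mu_fin (i:=i) Hv (@vec_supp i s))) lee_fin.
by rewrite fineK // mu_fin // => j; apply: vec_supp.
Qed.


Lemma near_finite (P : nat -> I -> Prop) J : finite_set J ->
  (forall j, J j -> \forall n \near \oo, P n j) ->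
  \forall n \near \oo, forall j, J j -> P n j.
Proof.
move/finite_seqP => [l ->]; elim: l => [|a l IH] H.
  by apply: nearW => n j /=; rewrite in_nil.
have Ha := H a (mem_head a l).
have Hl : \forall n \near \oo, forall j, [set` l] j -> P n j.
  by apply: IH => j /= jl; apply: H; rewrite /= in_cons jl orbT.
apply: filterS2 Ha Hl => n Pa Pl j /=; rewrite in_cons => /orP[/eqP->|jl] //.
exact: Pl.
Qed.

Lemma G_cont (x : nat -> I -> R) t i : (forall n, linf_pos (x n)) -> linf_pos t ->
  (forall j, (fun n => x n j) @ \oo --> t j) ->
  (fun n => G (x n) i) @ \oo --> G t i.
Proof.
move=> Hx Ht Hc.
have [HI [_ [Heq [_ [_ [_ [HM3 _]]]]]]] := Hgo.
have [K _ /(_ i) [Hv _]] := vec_linf Ht.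
have [_ Hmc] := HM3 i (Ii i) (proj1 (HI i)) (vec i t) Hv (@vec_supp i t).
apply/cvgrPdist_le => e e0.
have [d d0 Hd] := Hmc e e0.
have ev : \forall n \near \oo, forall j, Ii i j ->
    `|gam i j (x n j) - gam i j (t j)| <= d.
  apply: (@near_finite (fun n j => `|gam i j (x n j) - gam i j (t j)| <= d) (Ii i) (proj1 (HI i))) => j Hij.
  have t0 : 0 <= t j by case: Ht.
  have [d' d'0 Hd'] := Heq (t j) d t0 d0.
  near=> n; apply: Hd' => //; first by case: (Hx n).
  rewrite distrC; near: n. by apply: cvgr_dist_le; [apply: Hc|].
near=> n.
have Hn : forall j, Ii i j -> `|gam i j (x n j) - gam i j (t j)| <= d.
  by near: n; exact: ev.
have [Kn _ /(_ i) [Hvn _]] := vec_linf (Hx n).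
have := Hd (vec i (x n)) Hvn (@vec_supp i (x n)).
have Hnd : nrm (fun j => vec i (x n) j - vec i t j) <= d.
  apply: nrm_le => j; rewrite /vec; case: (boolP (j \in Ii i)) => [/set_mem Hij|_].
    exact: Hn.
  by rewrite subrr normr0 ltW.
move=> /(_ Hnd).
have f1 := mu_fin (i:=i) Hv (@vec_supp i t).
have f2 := mu_fin (i:=i) Hvn (@vec_supp i (x n)).
rewrite !G_def -(fineK f1) -(fineK f2) -EFinB abse_EFin !lee_fin.
by rewrite distrC.
Unshelve. all: by end_near.
Qed.


Lemma lim_le (u : nat -> R) l c : u @ \oo --> l -> (forall n, u n <= c) -> l <= c.
Proof.
move=> ul uc; rewrite leNgt; apply/negP => cl.
have [N _ HN] := cvgr_gt l ul _ cl.
by have := HN N (leqnn N); rewrite /= ltNge uc.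
Qed.

Lemma lim_ge (u : nat -> R) l c : u @ \oo --> l -> (forall n, c <= u n) -> c <= l.
Proof.
move=> ul uc; rewrite leNgt; apply/negP => cl.
have [N _ HN] := cvgr_lt l ul _ cl.
by have := HN N (leqnn N); rewrite /= ltNge uc.
Qed.

Lemma vle_refl s : vle s s. Proof. by []. Qed.
Lemma vle_trans s t b : vle s t -> vle t b -> vle s b.
Proof. by move=> H1 H2 i; apply: le_trans (H1 i) (H2 i). Qed.
Lemma vmax_le s t b : vle s b -> vle t b -> vle (vmax s t) b.
Proof. by move=> H1 H2 i; rewrite /vmax ge_max H1 H2. Qed.
Lemma le_vmaxl s t : vle s (vmax s t).
Proof. by move=> i; rewrite /vmax le_max lexx. Qed.
Lemma le_vmaxr s t : vle t (vmax s t).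
Proof. by move=> i; rewrite /vmax le_max lexx orbT. Qed.
Lemma vmax_mono s t s' t' : vle s s' -> vle t t' -> vle (vmax s t) (vmax s' t').
Proof.
move=> H1 H2; apply: vmax_le; first exact: vle_trans H1 (le_vmaxl _ _).
exact: vle_trans H2 (le_vmaxr _ _).
Qed.

Lemma sup_vec (x : nat -> I -> R) M : (forall n, linf_pos (x n)) ->
  (forall n, vle (x n) (x n.+1)) -> (forall n j, x n j <= M) ->
  exists t, [/\ linf_pos t, forall n, vle (x n) t,
    (forall j, (fun n => x n j) @ \oo --> t j) &
    forall j c, (forall n, x n j <= c) -> t j <= c].
Proof.
move=> Hx Hst HM.
have ub : forall j, has_ubound (range (fun n => x n j)).
  by move=> j; exists M => _ [n _ <-].
exists (fun j => sup (range (fun n => x n j))); split.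
- split.
    move=> j; apply: (@le_trans _ _ (x 0%N j)); first by case: (Hx 0%N).
    by apply: (ub_le_sup (ub j)); exists 0%N.
  exists M => j; apply: ge_sup; first by exists (x 0%N j), 0%N.
  by move=> _ [n _ <-].
- by move=> n j; apply: (ub_le_sup (ub j)); exists n.
- move=> j; apply: nondecreasing_cvgn => //.
  by apply/nondecreasing_seqP => n; exact: Hst.
- move=> j c Hc; apply: ge_sup; first by exists (x 0%N j), 0%N.
  by move=> _ [n _ <-].
Qed.

Lemma inf_vec (y : nat -> I -> R) : (forall n, linf_pos (y n)) ->
  (forall n, vle (y n.+1) (y n)) ->
  exists u, [/\ linf_pos u, forall n, vle u (y n) &
    (forall j, (fun n => y n j) @ \oo --> u j)].
Proof.
move=> Hy Hst.
have lb : forall j, has_lbound (range (fun n => y n j)).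
  by move=> j; exists 0 => _ [n _ <-]; case: (Hy n).
exists (fun j => inf (range (fun n => y n j))); split.
- split; first by move=> j; apply: lb_le_inf; [exists (y 0%N j), 0%N
    | by move=> _ [n _ <-]; case: (Hy n)].
  have [_ [M HM]] := Hy 0%N.
  exists M => j; apply: le_trans (HM j); apply: ge_inf (lb j) _ _; by exists 0%N.
- by move=> n j; apply: ge_inf (lb j) _ _; exists n.
- move=> j; apply: nonincreasing_cvgn => //.
  by apply/nonincreasing_seqP => n; exact: Hst.
Qed.

Lemma iter_hat_linf s n : linf_pos s -> linf_pos (iter n (hatop G) s).
Proof.
move=> Hs; elim: n => [|n IH] //=.
by apply: linf_vmax => //; apply: G_linf.
Qed.

Lemma iter_G_linf s n : linf_pos s -> linf_pos (iter n G s).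
Proof. by move=> Hs; elim: n => [|n IH] //=; apply: G_linf. Qed.

Lemma MBI_UGS : MBI G -> UGS (hatop G).
Proof.
move=> [phi Hphi HM]; exists phi => // s Hs n.
apply: HM => //; first exact: iter_hat_linf.
elim: n => [|n IH]; first exact: le_vmaxl.
rewrite [iter n.+1 _ _]/=.
set x := iter n (hatop G) s.
have Hx : linf_pos x by exact: iter_hat_linf.
have xx : vle x (hatop G x) by exact: le_vmaxl.
have Gx : vle (G x) (G (hatop G x)).
  by apply: G_mono => //; rewrite /hatop; apply: linf_vmax => //; apply: G_linf.
apply: vmax_le.
  apply: vle_trans IH _; apply: vmax_mono => //.
apply: vle_trans Gx _; exact: le_vmaxr.
Qed.

Lemma UGS_cofinal : UGS (hatop G) -> cofinal (Psi G).
Proof.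
move=> [phi Hphi HU] s Hs.
pose x n := iter n (hatop G) s.
have Hx : forall n, linf_pos (x n) by move=> n; exact: iter_hat_linf.
have [t [Ht xt xc _]] := @sup_vec x (phi (nrm s)) Hx
  (fun n => le_vmaxl _ _) (fun n j => le_trans (linf_le j (Hx n)) (HU s Hs n)).
exists t; last exact: (xt 0%N).
split => // i; apply: (lim_le (G_cont (i:=i) Hx Ht xc)) => n.
apply: le_trans (xt n.+1 i); exact: le_vmaxr.
Qed.

Lemma MBI_NJI : MBI G -> NJI G.
Proof.
move=> [phi Hphi HM] s Hs sne sle; apply: sne.
have := HM s (@vzero R I) Hs (linf_const (lexx 0)) (vle_trans sle (le_vmaxr _ _)).
rewrite nrm0; case: Hphi => -> _ Hn.
apply/funext => j; apply/eqP; rewrite eq_le; apply/andP; split.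
  exact: le_trans (linf_le j Hs) Hn.
by case: Hs.
Qed.

Lemma MBI_GATT : MBI G -> GATTs G.
Proof.
move=> HMBI s Hs.
have [t [Ht Gt] st] := UGS_cofinal (MBI_UGS HMBI) Hs.
pose y n := iter n G t.
have Hy : forall n, linf_pos (y n) by move=> n; exact: iter_G_linf.
have ydec : forall n, vle (y n.+1) (y n).
  elim=> [|n IH] //=; exact: G_mono (Hy _) (Hy _) IH.
have yt : forall n, vle (y n) t.
  by elim=> [|n IH] //; exact: vle_trans (ydec n) IH.
have [u [Hu uy yu]] := inf_vec Hy ydec.
have uG : vle u (G u).
  move=> i; apply: (lim_ge (G_cont (i:=i) Hy Hu yu)) => n; exact: (uy n.+1 i).
have u0 : forall j, u j = 0.
  have [phi Hphi HM] := HMBI.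
  have := HM u (@vzero R I) Hu (linf_const (lexx 0)) (vle_trans uG (le_vmaxr _ _)).
  rewrite nrm0; case: Hphi => -> _ Hn j.
  apply/eqP; rewrite eq_le; apply/andP; split.
    exact: le_trans (linf_le j Hu) Hn.
  by case: Hu.
have sy : forall n, vle (iter n G s) (y n).
  elim=> [|n IH] //=; apply: G_mono => //; exact: iter_G_linf.
split.
  exists (nrm t) => n; apply: nrm_mono => //; first exact: iter_G_linf.
  exact: vle_trans (sy n) (yt n).
move=> j; apply: (@squeeze_cvgr _ _ _ _ (fun _ => 0) (fun n => y n j)).
- apply: nearW => n; apply/andP; split; last exact: sy.
  by case: (iter_G_linf n Hs).
- exact: cvg_cst.
- by rewrite -(u0 j); exact: yu.
Qed.

Lemma GATT_NJI : GATTs G -> NJI G.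
Proof.
move=> HG s Hs sne sle.
have s0 : forall j, 0 <= s j by case: Hs.
have siter : forall n, vle s (iter n G s).
  elim=> [|n IH] //=; apply: vle_trans sle _.
  by apply: G_mono => //; exact: iter_G_linf.
case: (pselect (exists j, 0 < s j)) => [[j sj]|H].
  have [_ Hc] := HG s Hs.
  have := lim_ge (Hc j) (fun n => siter n j).
  by rewrite leNgt sj.
apply: sne; apply/funext => j; apply/eqP; rewrite eq_le s0 andbT leNgt.
by apply/negP => sj; apply: H; exists j.
Qed.

Lemma MBI_coercive : MBI G -> coercive (Aset G).
Proof.
move=> [phi Hphi HM].
have [psi Hpsi [pk kp]] := Kinf_inv Hphi.
exists psi => // s [r r0 [Hs Hfix]] i.
have Hn := HM s (@vconst R I r) Hs (linf_const r0) (ltac:(by rewrite -{1}Hfix)).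
rewrite nrm_const // in Hn.
have si : r <= s i by rewrite -Hfix /plusop /vmax le_max lexx.
apply: le_trans si; have := Kinf_le Hpsi (nrm_ge0 Hs) Hn.
by rewrite pk.
Qed.

Lemma d_MBI : cofinal (Psi G) -> NJI G -> coercive (Aset G) -> MBI G.
Proof.
move=> Hcof HN [psi Hpsi Hco].
have [phi Hphi [pk kp]] := Kinf_inv Hpsi.
exists phi => // s b Hs Hb sle.
set r := nrm b.
have r0 : 0 <= r by exact: nrm_ge0.
have sle' : vle s (vmax (vconst r) (G s)).
  apply: vle_trans sle _; apply: vmax_mono => //; exact: vle_const_nrm.
have [t [Ht Gt] st] := Hcof _ (linf_vmax Hs (linf_const r0)).
pose F := plusop G (vconst r).
pose x n := iter n F s.
have Hx : forall n, linf_pos (x n).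
  elim=> [|n IH] //=; apply: linf_vmax; [exact: linf_const | exact: G_linf].
have xinc : forall n, vle (x n) (x n.+1).
  elim=> [|n IH] //; rewrite [x n.+2]/= [x n.+1]/=.
  apply: vmax_mono => //; exact: G_mono (Hx _) (Hx _) IH.
have rt : vle (vconst r) t := vle_trans (le_vmaxr _ _) st.
have xt : forall n, vle (x n) t.
  elim=> [|n IH]; first exact: vle_trans (le_vmaxl _ _) st.
  rewrite [x n.+1]/=; apply: vmax_le => //.
  by apply: vle_trans Gt; apply: G_mono.
have [w [Hw xw xc wlub]] := @sup_vec x (nrm t) Hx xinc
  (fun n j => le_trans (xt n j) (linf_le j Ht)).
have Fw : F w = w.
  apply/funext => i; apply/eqP; rewrite eq_le; apply/andP; split.
    rewrite /F /plusop /vmax ge_max; apply/andP; split.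
      exact: le_trans (le_vmaxl _ _ i) (xw 1%N i).
    apply: (lim_le (G_cont (i:=i) Hx Hw xc)) => n.
    exact: le_trans (le_vmaxr _ _ i) (xw n.+1 i).
  apply: wlub; case=> [|n].
    apply: le_trans (sle' i) _.
    exact: (vmax_mono (vle_refl (vconst r)) (G_mono Hs Hw (xw 0%N)) i).
  exact: (vmax_mono (vle_refl (vconst r)) (G_mono (Hx n) Hw (xw n)) i).
have Aw : Aset G w by exists r.
have Hc := Hco w Aw.
have pr : psi (nrm w) <= r.
  rewrite leNgt; apply/negP => rp.
  have wG : vle w (G w).
    move=> i; have := Hc i; rewrite /vconst => pw.
    have : w i <= F w i by rewrite Fw.
    rewrite /F /plusop /vmax le_max => /orP[|//].
    by rewrite leNgt (lt_le_trans rp pw).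
  apply: (HN w Hw) wG => w0.
  move: rp; rewrite w0 nrm0; case: Hpsi => -> _.
  by rewrite ltNge r0.
have wphi : nrm w <= phi r.
  rewrite -(pk (nrm w) (nrm_ge0 Hw)); apply: Kinf_le Hphi _ pr.
  apply: Kinf_ge0 Hpsi _; exact: nrm_ge0.
apply: le_trans wphi; apply: nrm_mono => //; exact: xw 0%N.
Qed.

End Main.

Unset Implicit Arguments.

Theorem proposition3p4 (R : realType) (I : countType) (i0 : I)
  (Ii : I -> set I) (gam : I -> I -> R -> R) (mu : I -> (I -> R) -> \bar R) :
  gain_operator Ii gam mu ->
  (MBI (Gam Ii gam mu) <->
     [/\ UGS (hatop (Gam Ii gam mu)), GATTs (Gam Ii gam mu)
       & coercive (Aset (Gam Ii gam mu))]) /\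
  (MBI (Gam Ii gam mu) <->
     [/\ UGS (hatop (Gam Ii gam mu)), NJI (Gam Ii gam mu)
       & coercive (Aset (Gam Ii gam mu))]) /\
  (MBI (Gam Ii gam mu) <->
     [/\ cofinal (Psi (Gam Ii gam mu)), NJI (Gam Ii gam mu)
       & coercive (Aset (Gam Ii gam mu))]).
Proof.
move=> Hgo.

have U := MBI_UGS i0 Hgo.
have Ga := MBI_GATT i0 Hgo.
have Nj := @MBI_NJI R I i0 Ii gam mu.
have Co := @MBI_coercive R I i0 Ii gam mu.
have Cf := UGS_cofinal i0 Hgo.
have Dm := d_MBI i0 Hgo.
have GN := GATT_NJI i0 Hgo.
split; [|split]; split.
- by move=> H; split; [exact: U | exact: Ga | exact: Co].
- by case=> H1 H2 H3; apply: Dm => //; [exact: Cf | exact: GN].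
- by move=> H; split; [exact: U | exact: Nj | exact: Co].
- by case=> H1 H2 H3; apply: Dm => //; exact: Cf.
- by move=> H; split; [exact: Cf (U H) | exact: Nj | exact: Co].
- by case=> H1 H2 H3; apply: Dm.
Qed.
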